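(* Let $\gamma\in(1,3)$ and $\mu\in(0,1)$, and let $D=(U_D,H_D)=\big(\frac{2}{3-\gamma},(\frac{\gamma-1}{3-\gamma})^2\big)$. Among the integral curves of $\frac{dH}{dU}=\frac{F(H,U)}{G(H,U)}$ passing through $D$, there is exactly one with $\frac{dH}{dU}\big|_{U=U_D}=C_1:=\frac{(\gamma-1)^2}{3-\gamma}$, namely the special solution $H(U)=\frac{(\gamma-1)^2}{4}U^2$. All other integral curves passing through $D$ satisfy $\frac{dH}{dU}\big|_{U=U_D}=C_2$, where \[ C_2:=\frac{(\gamma-1)\big[-(\gamma-3)^2\mu+\gamma^2-2\gamma+5\big]}{2(3-\gamma)[(\gamma-3)\mu+2]}. \]
   Context: $k_1=\frac{(\gamma+1)+\mu(3-\gamma)}{2}$, $k_2=\frac{2(1-\mu)}{\gamma-1}$, $F(H,U)=2H[H-(U^2-k_1U+\mu)]$, $G(H,U)=H(U+k_2)-U(U-1)(U-\mu)$. An integral curve passing through $D$ is a trajectory of the planar system $\frac{dH}{ds}=F(H,U)$, $\frac{dU}{ds}=G(H,U)$ converging to $D$ (the point $D$ is an equilibrium, with $F=G=0$ and $(U_D-1)^2-H_D=0$). *)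

(* Defs.v *)
From Stdlib Require Import Reals.
From Coquelicot Require Import Coquelicot.
Open Scope R_scope.

Definition k1 (g mu : R) : R := ((g + 1) + mu * (3 - g)) / 2.
Definition k2 (g mu : R) : R := 2 * (1 - mu) / (g - 1).
Definition Ffun (g mu H U : R) : R := 2 * H * (H - (U ^ 2 - k1 g mu * U + mu)).
Definition Gfun (g mu H U : R) : R := H * (U + k2 g mu) - U * (U - 1) * (U - mu).

Definition U_D (g : R) : R := 2 / (3 - g).
Definition H_D (g : R) : R := ((g - 1) / (3 - g)) ^ 2.

Definition slopeC1 (g : R) : R := (g - 1) ^ 2 / (3 - g).
Definition slopeC2 (g mu : R) : R :=
  (g - 1) * (- (g - 3) ^ 2 * mu + g ^ 2 - 2 * g + 5)
  / (2 * (3 - g) * ((g - 3) * mu + 2)).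

(* Allowing sigma = -1 covers trajectories converging to D as s -> -oo. *)
Definition traj_to_D (g mu sigma : R) (H U : R -> R) : Prop :=
  (sigma = 1 \/ sigma = -1) /\
  (forall s, 0 <= s ->
     is_derive H s (sigma * Ffun g mu (H s) (U s)) /\
     is_derive U s (sigma * Gfun g mu (H s) (U s))) /\
  (forall s, 0 <= s -> (H s, U s) <> (H_D g, U_D g)) /\
  is_lim H p_infty (H_D g) /\
  is_lim U p_infty (U_D g).

Definition slope_at_D (g : R) (H U : R -> R) (c : R) : Prop :=
  (exists S, forall s, S < s -> U s <> U_D g) /\
  is_lim (fun s => (H s - H_D g) / (U s - U_D g)) p_infty c.

Definition on_special (g : R) (H U : R -> R) : Prop :=
  forall s, 0 <= s -> H s = (g - 1) ^ 2 / 4 * (U s) ^ 2.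

(* Main.v *)
Require Import Defs.
From Stdlib Require Import Reals.
From Coquelicot Require Import Coquelicot.
From Stdlib Require Import Lra Psatz Classical ClassicalEpsilon Ranalysis5.
Open Scope R_scope.

Definition cc (g : R) : R := (g - 1) ^ 2 / 4.
Definition Kf (g mu H U : R) : R := 2 * H - 2 * (U - 1) * (U - mu).
Definition ee (g mu : R) : R := mu * (3 - g) / 2.
Definition pf (g mu U : R) : R := U * ((cc g - 1) * U + ee g mu).
Definition qf (g mu U : R) : R := U + k2 g mu.

Section Alg.
Variables (g mu : R).
Hypotheses (hg1 : 1 < g) (hg3 : g < 3) (hmu0 : 0 < mu) (hmu1 : mu < 1).

Lemma I1 H U : Ffun g mu H U - 2 * cc g * U * Gfun g mu H U = (H - cc g * U ^ 2) * Kf g mu H U.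
Proof. unfold Ffun, Gfun, cc, Kf, k1, k2. field. lra. Qed.

Lemma I2 H U : Gfun g mu H U = pf g mu U * (U - U_D g) + qf g mu U * (H - cc g * U ^ 2).
Proof. unfold Gfun, pf, qf, cc, ee, U_D, k2. field. lra. Qed.

Lemma I3 : cc g * U_D g ^ 2 = H_D g.
Proof. unfold cc, U_D, H_D. field. lra. Qed.

Lemma UD_pos : 0 < U_D g.
Proof. unfold U_D. apply Rdiv_lt_0_compat; lra. Qed.

Lemma K0_neg : Kf g mu (H_D g) (U_D g) < 0.
Proof.
  replace (Kf g mu (H_D g) (U_D g)) with (- (2 * (g - 1) * (1 - mu)) / (3 - g)).
  - apply Rdiv_neg_pos; [|lra]. assert (0 < (g-1)*(1-mu)) by nra. lra.
  - unfold Kf, H_D, U_D. field. lra.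
Qed.

Lemma p0_neg : pf g mu (U_D g) < 0.
Proof.
  replace (pf g mu (U_D g)) with ((mu * (3 - g) - (g + 1)) / (3 - g)).
  - apply Rdiv_neg_pos; [|lra]. nra.
  - unfold pf, cc, ee, U_D. field. lra.
Qed.

Lemma pK_neg : pf g mu (U_D g) - Kf g mu (H_D g) (U_D g) < 0.
Proof.
  replace (pf g mu (U_D g) - Kf g mu (H_D g) (U_D g)) with
    (- ((1 - mu) * (3 - g) + mu * (2 * g - 2)) / (3 - g)).
  - apply Rdiv_neg_pos; [|lra]. nra.
  - unfold pf, Kf, cc, ee, U_D, H_D. field. lra.
Qed.

Lemma q0_pos : 0 < qf g mu (U_D g).
Proof.
  unfold qf, k2. pose proof UD_pos.
  assert (0 < 2 * (1 - mu) / (g - 1)) by (apply Rdiv_lt_0_compat; lra). lra.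
Qed.

Lemma C2_eq : slopeC2 g mu = slopeC1 g +
   (Kf g mu (H_D g) (U_D g) - pf g mu (U_D g)) / qf g mu (U_D g).
Proof.
  unfold slopeC2, slopeC1, Kf, pf, qf, cc, ee, U_D, H_D, k2.
  assert ((g - 3) * mu + 2 <> 0) by nra.
  assert (2 * (1 - mu) * (3 - g) + 2 * (g - 1) <> 0) by nra.
  field. repeat split; lra.
Qed.

Lemma C1_eq : slopeC1 g = 2 * cc g * U_D g.
Proof. unfold slopeC1, cc, U_D. field. lra. Qed.

End Alg.

Lemma L_mono f df a b : a <= b ->
  (forall t, a <= t <= b -> is_derive f t (df t)) ->
  (forall t, a <= t <= b -> df t <= 0) -> f b <= f a.
Proof.
  intros hab hd hs. destruct (Req_dec a b) as [->|hne]; [lra|].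
  destruct (MVT_cor2 f df a b) as [c [Hc1 Hc2]]; [lra| |].
  - intros c hc. apply is_derive_Reals. apply hd. lra.
  - assert (df c <= 0) by (apply hs; lra). nra.
Qed.

Lemma L_strict f df a b : a < b ->
  (forall t, a <= t <= b -> is_derive f t (df t)) ->
  (forall t, a <= t <= b -> df t < 0) -> f b < f a.
Proof.
  intros hab hd hs.
  destruct (MVT_cor2 f df a b) as [c [Hc1 Hc2]]; [lra| |].
  - intros c hc. apply is_derive_Reals. apply hd. lra.
  - assert (df c < 0) by (apply hs; lra). nra.
Qed.

Lemma ev_abs f l : is_lim f p_infty (Finite l) ->
  forall eps, 0 < eps -> exists M, forall s, M < s -> Rabs (f s - l) < eps.
Proof.
  intros Hl eps he. apply is_lim_spec in Hl. exact (Hl (mkposreal eps he)).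
Qed.

Lemma ev_lt f l m : is_lim f p_infty (Finite l) -> l < m ->
  exists M, forall s, M < s -> f s < m.
Proof.
  intros Hl hm. destruct (ev_abs f l Hl (m - l)) as [M HM]; [lra|].
  exists M. intros s hs. specialize (HM s hs). apply Rabs_def2 in HM. lra.
Qed.

Lemma ev_gt f l m : is_lim f p_infty (Finite l) -> m < l ->
  exists M, forall s, M < s -> m < f s.
Proof.
  intros Hl hm. destruct (ev_abs f l Hl (l - m)) as [M HM]; [lra|].
  exists M. intros s hs. specialize (HM s hs). apply Rabs_def2 in HM. lra.
Qed.

Lemma mk_lim f l : (forall eps, 0 < eps -> exists M, forall s, M < s -> Rabs (f s - l) < eps) ->
  is_lim f p_infty (Finite l).
Proof.
  intros H. apply is_lim_spec. intros eps. destruct (H eps (cond_pos eps)) as [M HM].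
  exists M. exact HM.
Qed.

Lemma L_blowup V dV S :
  (forall s, S <= s -> is_derive V s (dV s)) ->
  (forall s, S <= s -> 0 <= dV s) -> 0 < V S ->
  is_lim V p_infty (Finite 0) -> False.
Proof.
  intros hd hp hV hl.
  destruct (ev_lt V 0 (V S) hl hV) as [M HM].
  set (t := Rmax S M + 1).
  assert (V S <= V t).
  { assert (- V t <= - V S); [|lra].
    apply (L_mono (fun s => - V s) (fun s => - dV s) S t).
    - unfold t. pose proof (Rmax_l S M). lra.
    - intros s hs. apply (is_derive_opp V s (dV s)). apply hd. lra.
    - intros s hs. specialize (hp s ltac:(lra)). lra. }
  assert (V t < V S) by (apply HM; unfold t; pose proof (Rmax_r S M); lra). lra.
Qed.

Lemma L_nonvanish y a s0 t : s0 <= t ->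
  (forall s, s0 <= s <= t -> is_derive y s (a s * y s)) ->
  (forall s, s0 <= s <= t -> continuity_pt a s) ->
  y s0 <> 0 -> y t <> 0.
Proof.
  intros hst hd hc hy.
  destruct (continuity_ab_min a s0 t hst hc) as [m [Hm1 Hm2]].
  set (A := Rabs (a m)).
  set (Z := fun s => y s ^ 2 * exp (2 * A * s)).
  assert (Z s0 <= Z t).
  { assert (- Z t <= - Z s0); [|lra].
    apply (L_mono (fun s => - Z s)
       (fun s => - ((2 * a s * y s ^ 2 + 2 * A * y s ^ 2) * exp (2 * A * s))) s0 t hst).
    - intros s hs. specialize (hd s hs). unfold Z.
      assert (E : Derive (fun x => y x) s = a s * y s) by (apply is_derive_unique; exact hd).
      auto_derive.
      + eexists; exact hd.
      + rewrite E. ring.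
    - intros s hs. specialize (Hm1 s hs).
      assert (a m >= - A) by (unfold A; pose proof (Rabs_pos (a m)); pose proof (Rle_abs (- a m)); rewrite Rabs_Ropp in *; lra).
      assert (0 <= (a s + A) * y s ^ 2) by (apply Rmult_le_pos; [lra| apply pow2_ge_0]).
      pose proof (exp_pos (2 * A * s)).
      assert (0 <= (2 * a s * y s ^ 2 + 2 * A * y s ^ 2) * exp (2 * A * s)) by nra. lra. }
  unfold Z in H. intro Hyt. rewrite Hyt in H.
  assert (0 < y s0 ^ 2) by (apply pow2_gt_0; exact hy).
  pose proof (exp_pos (2 * A * s0)). nra.
Qed.

Lemma exp_ge1 z : 0 <= z -> 1 + z <= exp z.
Proof.
  intros hz. destruct (Req_dec z 0) as [->|hne].
  - rewrite exp_0. lra.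
  - left. apply exp_ineq1. exact hne.
Qed.

Lemma L_lin r al be a0 b0 S : a0 < 0 ->
  (forall s, S <= s -> is_derive r s (al s * r s + be s)) ->
  is_lim al p_infty (Finite a0) -> is_lim be p_infty (Finite b0) ->
  is_lim r p_infty (Finite (- b0 / a0)).
Proof.
  intros ha0 hd hal hbe.
  set (L := - b0 / a0).
  set (k := - a0 / 2).
  assert (hk : 0 < k) by (unfold k; lra).
  assert (hdl : is_lim (fun s => be s + al s * L) p_infty (Finite 0)).
  { replace 0 with (b0 + a0 * L) by (unfold L; field; lra).
    apply is_lim_plus'; [exact hbe|]. apply (is_lim_scal_r al L p_infty a0). exact hal. }
  apply mk_lim. intros eps he.
  destruct (ev_lt al a0 (a0/2) hal ltac:(lra)) as [M1 HM1].
  destruct (ev_abs _ 0 hdl (k * eps / 2)) as [M2 HM2].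
  { apply Rmult_lt_0_compat; [|lra]. nra. }
  set (S1 := Rmax S (Rmax M1 M2) + 1).
  assert (hS1 : S <= S1 /\ M1 < S1 /\ M2 < S1).
  { unfold S1. pose proof (Rmax_l S (Rmax M1 M2)). pose proof (Rmax_r S (Rmax M1 M2)).
    pose proof (Rmax_l M1 M2). pose proof (Rmax_r M1 M2). lra. }
  set (W := Rabs ((r S1 - L) ^ 2 - eps ^ 2 / 4)).
  exists (S1 + 2 * W / (k * eps ^ 2)).
  intros t ht.
  assert (hW : 0 <= W) by apply Rabs_pos.
  assert (hWt : 0 <= 2 * W / (k * eps ^ 2)).
  { apply Rmult_le_pos; [lra|]. left. apply Rinv_0_lt_compat. apply Rmult_lt_0_compat; [lra|]. nra. }
  assert (htS1 : S1 <= t) by lra.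
  set (Z := fun s => ((r s - L) ^ 2 - eps ^ 2 / 4) * exp (k * s)).
  assert (HZ : Z t <= Z S1).
  { apply (L_mono Z (fun s => (2 * (r s - L) * (al s * r s + be s) + k * ((r s - L) ^ 2 - eps ^ 2 / 4)) * exp (k * s)) S1 t htS1).
    - intros s hs. assert (hds := hd s ltac:(lra)).
      assert (E : Derive (fun x => r x) s = al s * r s + be s) by (apply is_derive_unique; exact hds).
      unfold Z. auto_derive.
      + eexists; exact hds.
      + rewrite E. field.
    - intros s hs. pose proof (exp_pos (k * s)).
      assert (h1 : al s < a0 / 2) by (apply HM1; lra).
      assert (h2 : Rabs (be s + al s * L - 0) < k * eps / 2) by (apply HM2; lra).
      rewrite Rminus_0_r in h2.
      set (e := r s - L) in *. set (d := be s + al s * L) in *.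
      assert (Hrw : al s * r s + be s = al s * e + d) by (unfold e, d; ring).
      rewrite Hrw.
      assert (h3 : e * d <= Rabs e * (k * eps / 2)).
      { apply Rle_trans with (Rabs (e * d)); [apply Rle_abs|]. rewrite Rabs_mult.
        apply Rmult_le_compat_l; [apply Rabs_pos| lra]. }
      assert (h4 : Rabs e * eps <= e ^ 2 + eps ^ 2 / 4).
      { rewrite <- (pow2_abs e). pose proof (pow2_ge_0 (Rabs e - eps / 2)). lra. }
      assert (h5 : al s * e ^ 2 <= - k * e ^ 2).
      { assert (0 <= e ^ 2) by apply pow2_ge_0. unfold k. nra. }
      assert (2 * e * (al s * e + d) + k * (e ^ 2 - eps ^ 2 / 4) <= 0) by nra.
      nra. }
  unfold Z in HZ.
  assert (Ee : exp (k * t) = exp (k * S1) * exp (k * (t - S1))) by (rewrite <- exp_plus; f_equal; ring). rewrite Ee in HZ.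
  pose proof (exp_pos (k * S1)).
  assert (HZ2 : ((r t - L) ^ 2 - eps ^ 2 / 4) * exp (k * (t - S1)) <= W).
  { apply Rmult_le_reg_l with (exp (k * S1)); [lra|].
    apply Rle_trans with (((r S1 - L) ^ 2 - eps ^ 2 / 4) * exp (k * S1)); [nra|].
    rewrite Rmult_comm. apply Rmult_le_compat_l; [lra| apply Rle_abs]. }
  assert (hex : 1 + k * (t - S1) <= exp (k * (t - S1))) by (apply exp_ge1; nra).
  assert (hkt : 2 * W / eps ^ 2 < k * (t - S1)).
  { assert (t - S1 > 2 * W / (k * eps ^ 2)) by lra.
    assert (0 < eps ^ 2) by nra.
    replace (2 * W / eps ^ 2) with (k * (2 * W / (k * eps ^ 2))) by (field; lra).
    apply Rmult_lt_compat_l; lra. }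
  assert (hV : (r t - L) ^ 2 < eps ^ 2).
  { destruct (Rlt_or_le ((r t - L) ^ 2) (eps ^ 2)) as [h|h]; [exact h|exfalso].
    assert (0 < eps ^ 2) by nra.
    assert (W < eps ^ 2 / 2 * (1 + k * (t - S1))).
    { assert (2 * W < eps ^ 2 * (k * (t - S1))).
      { apply Rmult_lt_reg_r with (/ eps ^ 2). apply Rinv_0_lt_compat; lra.
        replace (eps ^ 2 * (k * (t - S1)) * / eps ^ 2) with (k * (t - S1)) by (field; lra).
        unfold Rdiv in hkt. lra. }
      nra. }
    assert (eps ^ 2 / 2 * (1 + k * (t - S1)) <= ((r t - L) ^ 2 - eps ^ 2 / 4) * exp (k * (t - S1))).
    { apply Rle_trans with (eps ^ 2 / 2 * exp (k * (t - S1))).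
      - apply Rmult_le_compat_l; lra.
      - apply Rmult_le_compat_r; [left; apply exp_pos| lra]. }
    lra. }
  destruct (Rlt_or_le (Rabs (r t - L)) eps) as [h|h]; [exact h|exfalso].
  rewrite <- (pow2_abs (r t - L)) in hV. nra.
Qed.

Lemma lp f g x (a b l : R) : is_lim f x a -> is_lim g x b -> l = a + b ->
  is_lim (fun y => f y + g y) x l.
Proof. intros. subst. apply is_lim_plus'; auto. Qed.
Lemma lm f g x (a b l : R) : is_lim f x a -> is_lim g x b -> l = a - b ->
  is_lim (fun y => f y - g y) x l.
Proof. intros. subst. apply is_lim_minus'; auto. Qed.
Lemma lmul f g x (a b l : R) : is_lim f x a -> is_lim g x b -> l = a * b ->
  is_lim (fun y => f y * g y) x l.
Proof. intros Ha Hb ->. apply (is_lim_mult f g x a b Ha Hb). exact I. Qed.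
Lemma lpow2 f x (a l : R) : is_lim f x a -> l = a ^ 2 ->
  is_lim (fun y => f y ^ 2) x l.
Proof. intros Ha ->. apply is_lim_ext with (fun y => f y * f y). intro y. ring.
  apply (lmul f f x a a); auto. ring. Qed.
Lemma lc x (a l : R) : l = a -> is_lim (fun _ => a) x l.
Proof. intros ->. apply is_lim_const. Qed.

Lemma linv f x (a l : R) : is_lim f x a -> a <> 0 -> l = / a ->
  is_lim (fun y => / f y) x l.
Proof. intros Ha Hn ->. apply (is_lim_inv f x a Ha). intro E. apply Hn. injection E. auto. Qed.

Ltac exd := repeat (first [exact I | (eexists; eassumption) | split]).

Ltac lim := first
  [ eapply lc
  | eassumption
  | eapply lp; [lim | lim | ]
  | eapply lm; [lim | lim | ]
  | eapply lmul; [lim | lim | ]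
  | eapply lpow2; [lim | ] ].
Ltac limt := lim; first [reflexivity | ring | (unfold Rminus; ring) | idtac].

Section Main.
Variables (g mu : R).
Hypotheses (hg1 : 1 < g) (hg3 : g < 3) (hmu0 : 0 < mu) (hmu1 : mu < 1).

Lemma spec_slope sigma H U : traj_to_D g mu sigma H U -> on_special g H U ->
  slope_at_D g H U (slopeC1 g).
Proof.
  intros [hs [hd [hne [hlH hlU]]]] hsp.
  assert (hU : forall s, 0 <= s -> U s <> U_D g).
  { intros s h0 he. apply (hne s h0). rewrite (hsp s h0), he.
    rewrite <- (I3 g) by lra. unfold cc. reflexivity. }
  split.
  - exists 0. intros s h. apply hU. lra.
  - apply is_lim_ext_loc with (fun s => cc g * (U s + U_D g)).
    + exists 0. intros s h. rewrite (hsp s ltac:(lra)). rewrite <- (I3 g) by lra.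
      unfold cc. field. intro E. apply (hU s ltac:(lra)). lra.
    + rewrite (C1_eq g) by lra. lim. all: try reflexivity. ring.
Qed.


Lemma caseB sigma H U : traj_to_D g mu sigma H U -> ~ on_special g H U ->
  slope_at_D g H U (slopeC2 g mu).
Proof.
  intros [hs [hd [hne [hlH hlU]]]] hns.
  apply not_all_ex_not in hns. destruct hns as [s0 hs0].
  apply imply_to_and in hs0. destruct hs0 as [hs00 hw0].
  pose (w := fun s => H s - cc g * U s ^ 2).
  assert (hdw : forall s, 0 <= s -> is_derive w s (sigma * Kf g mu (H s) (U s) * w s)).
  { intros s h. destruct (hd s h) as [dH dU].
    assert (EH : Derive (fun x => H x) s = sigma * Ffun g mu (H s) (U s)) by (apply is_derive_unique; exact dH).
    assert (EU : Derive (fun x => U x) s = sigma * Gfun g mu (H s) (U s)) by (apply is_derive_unique; exact dU).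
    unfold w. auto_derive; [exd|]. rewrite EH, EU.
    replace (Ffun g mu (H s) (U s)) with (2 * cc g * U s * Gfun g mu (H s) (U s) + (H s - cc g * U s ^ 2) * Kf g mu (H s) (U s))
      by (rewrite <- (I1 g mu) by lra; ring).
    ring. }
  assert (hnz : forall t, s0 <= t -> w t <> 0).
  { intros t ht. apply (L_nonvanish w (fun s => sigma * Kf g mu (H s) (U s)) s0 t ht).
    - intros s hs'. apply hdw. lra.
    - intros s hs'. destruct (hd s ltac:(lra)) as [dH dU].
      apply continuity_pt_filterlim. apply (ex_derive_continuous (fun s => sigma * Kf g mu (H s) (U s))).
      unfold Kf. auto_derive. exd.
    - unfold w, cc. intro E. apply hw0. lra. }
  assert (hlw : is_lim w p_infty 0).
  { unfold w. lim. all: try reflexivity. rewrite <- (I3 g) by lra. ring. }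
  assert (hlK : is_lim (fun s => Kf g mu (H s) (U s)) p_infty (Kf g mu (H_D g) (U_D g))).
  { unfold Kf. lim. all: try reflexivity. }
  assert (hsig : sigma = 1).
  { destruct hs as [h| ->]; [exact h| exfalso].
    assert (hK0 : Kf g mu (H_D g) (U_D g) < 0) by (apply K0_neg; lra).
    destruct (ev_lt _ _ (Kf g mu (H_D g) (U_D g) / 2) hlK ltac:(lra)) as [M HM].
    set (S := Rmax s0 M + 1).
    assert (hS : s0 <= S /\ M < S) by (unfold S; pose proof (Rmax_l s0 M); pose proof (Rmax_r s0 M); lra).
    apply (L_blowup (fun s => w s ^ 2) (fun s => INR 2 * (-1 * Kf g mu (H s) (U s) * w s) * w s ^ Nat.pred 2) S).
    - intros s h. apply is_derive_pow. apply hdw. lra.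
    - intros s h. simpl. assert (Kf g mu (H s) (U s) < 0) by (specialize (HM s ltac:(lra)); lra).
      assert (0 <= w s * w s) by nra. nra.
    - apply pow2_gt_0. apply hnz. lra.
    - lim. all: try reflexivity. ring. }
  subst sigma.
  pose (r := fun s => (U s - U_D g) / w s).
  assert (hdr : forall s, s0 <= s -> is_derive r s
     ((pf g mu (U s) - Kf g mu (H s) (U s)) * r s + qf g mu (U s))).
  { intros s h. destruct (hd s ltac:(lra)) as [dH dU].
    assert (EH : Derive (fun x => H x) s = 1 * Ffun g mu (H s) (U s)) by (apply is_derive_unique; exact dH).
    assert (EU : Derive (fun x => U x) s = 1 * Gfun g mu (H s) (U s)) by (apply is_derive_unique; exact dU).
    pose proof (hnz s h) as hws. unfold r, w in *. auto_derive; [repeat split; try (eexists; eassumption); intro E; apply hws; rewrite <- E; ring|]. rewrite EH, EU.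
    replace (Ffun g mu (H s) (U s)) with (2 * cc g * U s * Gfun g mu (H s) (U s) + (H s - cc g * U s ^ 2) * Kf g mu (H s) (U s))
      by (rewrite <- (I1 g mu) by lra; ring).
    rewrite (I2 g mu) by lra.
    field. exact hws. }
  assert (hpK : pf g mu (U_D g) - Kf g mu (H_D g) (U_D g) < 0) by (apply pK_neg; lra).
  assert (hq0 : 0 < qf g mu (U_D g)) by (apply q0_pos; lra).
  assert (hlr := L_lin r (fun s => pf g mu (U s) - Kf g mu (H s) (U s)) (fun s => qf g mu (U s))
     (pf g mu (U_D g) - Kf g mu (H_D g) (U_D g)) (qf g mu (U_D g)) s0 hpK hdr).
  assert (hlr' : is_lim r p_infty (- qf g mu (U_D g) / (pf g mu (U_D g) - Kf g mu (H_D g) (U_D g)))).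
  { apply hlr; unfold pf, Kf, qf; lim; reflexivity. }
  clear hlr.
  set (Lr := - qf g mu (U_D g) / (pf g mu (U_D g) - Kf g mu (H_D g) (U_D g))) in *.
  assert (hLr : 0 < Lr).
  { unfold Lr. replace (- qf g mu (U_D g) / (pf g mu (U_D g) - Kf g mu (H_D g) (U_D g)))
      with (qf g mu (U_D g) / (Kf g mu (H_D g) (U_D g) - pf g mu (U_D g))) by (field; lra).
    apply Rdiv_lt_0_compat; lra. }
  destruct (ev_gt r Lr (Lr / 2) hlr' ltac:(lra)) as [M HM].
  assert (hx : forall s, Rmax s0 M < s -> U s <> U_D g /\ w s <> 0).
  { intros s h. pose proof (Rmax_l s0 M). pose proof (Rmax_r s0 M).
    split; [|apply hnz; lra].
    intro E. specialize (HM s ltac:(lra)). unfold r in HM. rewrite E in HM.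
    unfold Rdiv in HM. rewrite Rminus_diag, Rmult_0_l in HM. lra. }
  split.
  - exists (Rmax s0 M). intros s h. apply hx. exact h.
  - apply is_lim_ext_loc with (fun s => / r s + cc g * (U s + U_D g)).
    + exists (Rmax s0 M). intros s h. destruct (hx s h) as [hx1 hx2].
      unfold r, w in *. rewrite <- (I3 g) by lra. field.
      split; [intro E; apply hx1; lra | exact hx2].
    + eapply lp; [eapply linv; [exact hlr'| lra | reflexivity] | lim | ].
      all: try reflexivity.
      rewrite (C2_eq g mu), (C1_eq g) by lra. unfold Lr. field. split; lra.
Qed.

End Main.

Lemma ln_le' x y : 0 < x -> x <= y -> ln x <= ln y.
Proof. intros hx [h|h]. left; apply ln_increasing; lra. subst; lra. Qed.

Section Exist.
Variables (g mu : R).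
Hypotheses (hg1 : 1 < g) (hg3 : g < 3) (hmu0 : 0 < mu) (hmu1 : mu < 1).

Definition uu := U_D g.
Definition r3 := ee g mu / (1 - cc g).
Definition fU (V : R) := pf g mu V * (V - uu).
Definition Aa := 1 / (uu * r3).
Definition Bb := 1 / (uu * (uu - r3)).
Definition Cc := 1 / (r3 * (r3 - uu)).
Definition Phi (V : R) := (Aa * ln V + Bb * ln (V - uu) + Cc * ln (V - r3)) / (cc g - 1).

Lemma c_bounds : 0 < cc g < 1.
Proof. unfold cc. split; nra. Qed.

Lemma uu_pos : 0 < uu.
Proof. unfold uu. apply UD_pos; lra. Qed.

Lemma r3_bounds : 0 < r3 < uu.
Proof.
  pose proof c_bounds. pose proof uu_pos.
  assert (he : 0 < ee g mu) by (unfold ee; nra).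
  assert (hp : pf g mu uu < 0) by (apply p0_neg; lra).
  unfold pf in hp.
  assert (h2 : (cc g - 1) * uu + ee g mu < 0).
  { destruct (Rlt_or_le ((cc g - 1) * uu + ee g mu) 0) as [h|h]; [exact h|]. nra. }
  unfold r3. split.
  - apply Rdiv_lt_0_compat; lra.
  - apply Rmult_lt_reg_r with (1 - cc g); [lra|]. unfold Rdiv. rewrite Rmult_assoc, Rinv_l by lra. lra.
Qed.

Lemma fU_fact V : fU V = (cc g - 1) * V * (V - uu) * (V - r3).
Proof. pose proof c_bounds. unfold fU, pf, r3. field. lra. Qed.

Lemma fU_neg V : uu < V -> fU V < 0.
Proof.
  intros h. rewrite fU_fact. pose proof c_bounds. pose proof r3_bounds. pose proof uu_pos.
  assert (0 < V * (V - uu) * (V - r3)).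
  { apply Rmult_lt_0_compat; [apply Rmult_lt_0_compat|]; lra. }
  nra.
Qed.

Lemma Phi_deriv V : uu < V -> is_derive Phi V (1 / fU V).
Proof.
  intros h. pose proof c_bounds. pose proof r3_bounds. pose proof uu_pos.
  unfold Phi. auto_derive.
  - repeat split; lra.
  - rewrite fU_fact. unfold Aa, Bb, Cc. field. repeat split; lra.
Qed.

Lemma Phi_strict a b : uu < a -> a < b -> Phi b < Phi a.
Proof.
  intros ha hab. apply (L_strict Phi (fun V => 1 / fU V) a b hab).
  - intros t ht. apply Phi_deriv. lra.
  - intros t ht. assert (fU t < 0) by (apply fU_neg; lra).
    unfold Rdiv. rewrite Rmult_1_l. apply Rinv_lt_0_compat. lra.
Qed.

Lemma Phi_le a b : uu < a -> a <= b -> Phi b <= Phi a.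
Proof. intros ha [h|h]. left; apply Phi_strict; lra. subst; lra. Qed.

Lemma Phi_cont V : uu < V -> continuity_pt Phi V.
Proof.
  intros h. apply continuity_pt_filterlim. apply (ex_derive_continuous Phi).
  eexists. apply Phi_deriv. exact h.
Qed.

Definition U0 := uu + 1.

Lemma Phi_big T : exists V, uu < V <= U0 /\ T <= Phi V.
Proof.
  pose proof c_bounds. pose proof r3_bounds. pose proof uu_pos.
  assert (hA : 0 < Aa) by (unfold Aa; apply Rdiv_lt_0_compat; nra).
  assert (hB : 0 < Bb) by (unfold Bb; apply Rdiv_lt_0_compat; nra).
  assert (hC : Cc < 0).
  { unfold Cc. unfold Rdiv. rewrite Rmult_1_l. apply Rinv_lt_0_compat. nra. }
  set (L0 := (Aa * ln U0 + Cc * ln (uu - r3)) / (cc g - 1)).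
  set (M := Rmax 0 ((T - L0) * (1 - cc g) / Bb)).
  assert (hM0 : 0 <= M) by apply Rmax_l.
  assert (hM1 : (T - L0) * (1 - cc g) / Bb <= M) by apply Rmax_r.
  exists (uu + exp (- M)).
  pose proof (exp_pos (- M)).
  assert (he1 : exp (- M) <= 1).
  { destruct hM0 as [h|h]. left. rewrite <- exp_0. apply exp_increasing. lra.
    rewrite <- h. rewrite Ropp_0, exp_0. lra. }
  split; [unfold U0; lra|].
  unfold Phi. replace (uu + exp (- M) - uu) with (exp (- M)) by ring. rewrite ln_exp.
  assert (h1 : ln (uu + exp (- M)) <= ln U0) by (apply ln_le'; unfold U0; lra).
  assert (h2 : ln (uu - r3) <= ln (uu + exp (- M) - r3)) by (apply ln_le'; lra).
  assert (h3 : T - L0 <= Bb * M / (1 - cc g)).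
  { apply Rmult_le_reg_r with ((1 - cc g) / Bb). apply Rdiv_lt_0_compat; lra.
    replace (Bb * M / (1 - cc g) * ((1 - cc g) / Bb)) with M by (field; lra).
    unfold Rdiv in *. rewrite <- Rmult_assoc. lra. }
  assert (h4 : L0 + Bb * M / (1 - cc g) <= (Aa * ln (uu + exp (- M)) + Bb * - M + Cc * ln (uu + exp (- M) - r3)) / (cc g - 1)).
  { unfold L0.
    assert (Eq : (Aa * ln (uu + exp (- M)) + Bb * - M + Cc * ln (uu + exp (- M) - r3)) / (cc g - 1)
             - ((Aa * ln U0 + Cc * ln (uu - r3)) / (cc g - 1) + Bb * M / (1 - cc g)) =  ((Aa * (ln U0 - ln (uu + exp (- M))) + (- Cc) * (ln (uu + exp (- M) - r3) - ln (uu - r3))) / (1 - cc g)))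
      by (field; lra).
    assert (0 <= (Aa * (ln U0 - ln (uu + exp (- M))) + (- Cc) * (ln (uu + exp (- M) - r3) - ln (uu - r3))) / (1 - cc g)); [|lra].
    apply Rmult_le_pos; [|left; apply Rinv_0_lt_compat; lra].
    apply Rplus_le_le_0_compat; apply Rmult_le_pos; lra. }
  lra.
Qed.

Definition tau (s : R) := Phi U0 + 1 + s.

Lemma Psi_ex s : -1 < s -> exists V, uu < V < U0 /\ Phi V = tau s.
Proof.
  intros hs. pose proof uu_pos.
  destruct (Phi_big (tau s)) as [V1 [[hV1 hV1'] hV1'']].
  assert (hPU0 : Phi U0 < tau s) by (unfold tau; lra).
  assert (hlt : V1 < U0) by (destruct hV1' as [h|h]; [exact h| subst; lra]).
  destruct (f_interv_is_interv (fun V => - Phi V) V1 U0 (- tau s) hlt) as [V [hV hVe]].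
  - lra.
  - intros a ha. apply continuity_pt_opp. apply Phi_cont. lra.
  - exists V. split; [|lra]. split; [lra|].
    destruct (proj2 hV) as [h|h]; [exact h|]. subst. lra.
Qed.

Definition Psi (s : R) : R := epsilon (inhabits 0) (fun V => uu < V < U0 /\ Phi V = tau s).

Lemma Psi_spec s : -1 < s -> uu < Psi s < U0 /\ Phi (Psi s) = tau s.
Proof. intros hs. unfold Psi. apply epsilon_spec. apply Psi_ex. exact hs. Qed.


Lemma Psi_cont s : -1 < s -> forall eps, 0 < eps -> exists dl, 0 < dl /\ forall s', Rabs (s' - s) < dl -> -1 < s' /\ Rabs (Psi s' - Psi s) < eps.
Proof.
  intros hs eps he. destruct (Psi_spec s hs) as [[hy1 hy2] hPy].
  set (y := Psi s) in *.
  set (e1 := Rmin eps (Rmin (y - uu) (U0 - y)) / 2).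
  assert (hm1 := Rmin_l eps (Rmin (y - uu) (U0 - y))).
  assert (hm2 := Rmin_r eps (Rmin (y - uu) (U0 - y))).
  assert (hm3 := Rmin_l (y - uu) (U0 - y)).
  assert (hm4 := Rmin_r (y - uu) (U0 - y)).
  assert (hm5 : 0 < Rmin eps (Rmin (y - uu) (U0 - y))) by (repeat apply Rmin_glb_lt; lra).
  assert (he1 : 0 < e1 /\ e1 < eps /\ e1 < y - uu /\ e1 < U0 - y) by (unfold e1; lra).
  assert (ha1 : Phi (y + e1) < tau s) by (rewrite <- hPy; apply Phi_strict; lra).
  assert (hb1 : tau s < Phi (y - e1)) by (rewrite <- hPy; apply Phi_strict; lra).
  set (dl := Rmin (Rmin (tau s - Phi (y + e1)) (Phi (y - e1) - tau s)) (s + 1)).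
  assert (hd1 := Rmin_l (Rmin (tau s - Phi (y + e1)) (Phi (y - e1) - tau s)) (s + 1)).
  assert (hd2 := Rmin_r (Rmin (tau s - Phi (y + e1)) (Phi (y - e1) - tau s)) (s + 1)).
  assert (hd3 := Rmin_l (tau s - Phi (y + e1)) (Phi (y - e1) - tau s)).
  assert (hd4 := Rmin_r (tau s - Phi (y + e1)) (Phi (y - e1) - tau s)).
  exists dl. split.
  { unfold dl. repeat apply Rmin_glb_lt; lra. }
  intros s' hs'. apply Rabs_def2 in hs'. unfold dl in hs'. destruct hs' as [hs'a hs'b].
  assert (hs1 : -1 < s') by lra. split; [exact hs1|].
  destruct (Psi_spec s' hs1) as [[hz1 hz2] hPz].
  assert (ht : tau s' - tau s = s' - s) by (unfold tau; ring).
  apply Rabs_def1.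
  - destruct (Rlt_or_le (Psi s' - y) eps) as [h|h]; [exact h|exfalso].
    assert (Phi (Psi s') <= Phi (y + e1)) by (apply Phi_le; lra). lra.
  - destruct (Rlt_or_le (- eps) (Psi s' - y)) as [h|h]; [exact h|exfalso].
    assert (Phi (y - e1) <= Phi (Psi s')) by (apply Phi_le; lra). lra.
Qed.

Lemma Psi_deriv s : -1 < s -> is_derive Psi s (fU (Psi s)).
Proof.
  intros hs. apply is_derive_Reals. intros eps he.
  destruct (Psi_spec s hs) as [[hy1 hy2] hPy].
  set (y := Psi s) in *.
  assert (hf : fU y < 0) by (apply fU_neg; lra).
  set (d := 1 / fU y).
  assert (hdn : d < 0) by (unfold d, Rdiv; rewrite Rmult_1_l; apply Rinv_lt_0_compat; lra).
  assert (HP := proj1 (is_derive_Reals Phi y d) (Phi_deriv y hy1)).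
  set (e' := Rmin (- d / 2) (eps * d ^ 2 / 2)).
  assert (he'1 := Rmin_l (- d / 2) (eps * d ^ 2 / 2)).
  assert (he'2 := Rmin_r (- d / 2) (eps * d ^ 2 / 2)).
  assert (hd2 : 0 < d ^ 2) by nra.
  assert (he' : 0 < e') by (unfold e'; apply Rmin_glb_lt; nra).
  destruct (HP e' he') as [d1 Hd1].
  destruct (Psi_cont s hs d1 (cond_pos d1)) as [d2 [hd2' Hd2]].
  exists (mkposreal d2 hd2'). simpl. intros h hh0 hh.
  destruct (Hd2 (s + h)) as [hsh hk]. { replace (s + h - s) with h by ring. exact hh. }
  destruct (Psi_spec (s + h) hsh) as [_ hPk].
  fold y in hk.
  set (k := Psi (s + h) - y) in *.
  assert (hPk' : Phi (y + k) - Phi y = h).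
  { unfold k. replace (y + (Psi (s + h) - y)) with (Psi (s + h)) by ring. rewrite hPk, hPy. unfold tau. ring. }
  assert (hk0 : k <> 0).
  { intro E. rewrite E, Rplus_0_r in hPk'. apply hh0. lra. }
  specialize (Hd1 k hk0 hk). rewrite hPk' in Hd1.
  apply Rabs_def2 in Hd1. unfold e' in Hd1. destruct Hd1 as [Hd1a Hd1b].
  set (Q := h / k) in *.
  assert (hQ : Q < d / 2) by lra.
  assert (hQd : d ^ 2 / 2 <= Q * d) by nra.
  replace (Psi (s + h) - Psi s) with k by (unfold k, y; ring).
  replace (k / h - fU y) with ((d - Q) / (Q * d)).
  2:{ unfold Q, d. field. repeat split; lra. }
  assert (hQd0 : 0 < Q * d) by nra.
  unfold Rdiv. rewrite Rabs_mult, (Rabs_pos_eq (/ (Q * d))) by (left; apply Rinv_0_lt_compat; lra).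
  apply Rmult_lt_reg_r with (Q * d); [lra|].
  rewrite Rmult_assoc, Rinv_l by lra. rewrite Rmult_1_r.
  assert (Rabs (d - Q) < Rmin (- d / 2) (eps * d ^ 2 / 2)) by (apply Rabs_def1; lra).
  assert (eps * (d ^ 2 / 2) <= eps * (Q * d)) by (apply Rmult_le_compat_l; lra).
  nra.
Qed.

Lemma Psi_lim : is_lim Psi p_infty uu.
Proof.
  apply mk_lim. intros eps he. pose proof uu_pos.
  set (v := Rmin (uu + eps / 2) U0).
  assert (hv1 := Rmin_l (uu + eps / 2) U0). assert (hv2 := Rmin_r (uu + eps / 2) U0).
  assert (hv : uu < v) by (unfold v, U0; apply Rmin_glb_lt; lra).
  exists (Rmax 0 (Phi v - Phi U0 - 1)). intros s hs.
  assert (h1 := Rmax_l 0 (Phi v - Phi U0 - 1)). assert (h2 := Rmax_r 0 (Phi v - Phi U0 - 1)).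
  destruct (Psi_spec s ltac:(lra)) as [[hz1 hz2] hPz].
  assert (Psi s < v).
  { destruct (Rlt_or_le (Psi s) v) as [h|h]; [exact h|exfalso].
    assert (Phi (Psi s) <= Phi v) by (apply Phi_le; lra). unfold tau in hPz. lra. }
  apply Rabs_def1; unfold v in *; lra.
Qed.

Lemma exist_traj : exists sigma H U, traj_to_D g mu sigma H U /\ on_special g H U.
Proof.
  exists 1, (fun s => cc g * Psi s ^ 2), Psi.
  assert (hG : forall V, Gfun g mu (cc g * V ^ 2) V = fU V).
  { intro V. rewrite (I2 g mu) by lra. unfold fU, uu. ring. }
  assert (hF : forall V, Ffun g mu (cc g * V ^ 2) V = 2 * cc g * V * fU V).
  { intro V. rewrite <- hG. pose proof (I1 g mu ltac:(lra) (cc g * V ^ 2) V) as E.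
    replace (cc g * V ^ 2 - cc g * V ^ 2) with 0 in E by ring. lra. }
  split; [|intros s _; reflexivity].
  split; [left; reflexivity|].
  split.
  { intros s hs. assert (hd := Psi_deriv s ltac:(lra)).
    assert (E : Derive (fun x => Psi x) s = fU (Psi s)) by (apply is_derive_unique; exact hd).
    split.
    - auto_derive; [eexists; exact hd|]. rewrite E, hF. ring.
    - rewrite hG. rewrite Rmult_1_l. exact hd. }
  split.
  { intros s hs E. injection E as E1 E2. destruct (Psi_spec s ltac:(lra)) as [[h1 _] _].
    unfold uu in h1. lra. }
  split.
  - eapply (lmul (fun _ => cc g) (fun s => Psi s ^ 2)).
    + apply is_lim_const.
    + eapply lpow2. exact Psi_lim. reflexivity.
    + rewrite <- (I3 g) by lra. reflexivity.
  - exact Psi_lim.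
Qed.

End Exist.

Theorem lemma4p2 (g mu : R) (hg1 : 1 < g) (hg3 : g < 3) (hmu0 : 0 < mu) (hmu1 : mu < 1) :
  (* the special solution is an integral curve through D, with slope C1 *)
  (exists sigma H U, traj_to_D g mu sigma H U /\ on_special g H U /\ slope_at_D g H U (slopeC1 g)) /\
  (* every integral curve through D has slope C1 or C2 at D, and slope C1
     exactly when it is (a piece of) the special solution *)
  (forall sigma H U, traj_to_D g mu sigma H U ->
     (slope_at_D g H U (slopeC1 g) \/ slope_at_D g H U (slopeC2 g mu)) /\
     (slope_at_D g H U (slopeC1 g) <-> on_special g H U)).
Proof.
  split.
  - assert (Ex : exists sigma H U, traj_to_D g mu sigma H U /\ on_special g H U)
      by (apply exist_traj; lra).
    destruct Ex as [sigma [H [U [ht hs]]]].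
    exists sigma, H, U. split; [exact ht|]. split; [exact hs|].
    eapply spec_slope; eauto; lra.
  - intros sigma H U ht. destruct (classic (on_special g H U)) as [hs|hns].
    + assert (C1 : slope_at_D g H U (slopeC1 g)) by (eapply spec_slope; eauto; lra).
      split; [left; exact C1|]. split; intros; auto.
    + assert (C2 : slope_at_D g H U (slopeC2 g mu)) by (eapply caseB; eauto; lra).
      split; [right; exact C2|]. split.
      * intros C1. exfalso. destruct C1 as [_ l1]. destruct C2 as [_ l2].
        apply is_lim_unique in l1. apply is_lim_unique in l2. rewrite l1 in l2.
        injection l2 as E.
        assert (hpK : pf g mu (U_D g) - Kf g mu (H_D g) (U_D g) < 0) by (apply pK_neg; lra).
        assert (hq0 : 0 < qf g mu (U_D g)) by (apply q0_pos; lra).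
        rewrite (C2_eq g mu) in E by lra.
        assert (0 < (Kf g mu (H_D g) (U_D g) - pf g mu (U_D g)) / qf g mu (U_D g))
          by (apply Rdiv_lt_0_compat; lra).
        lra.
      * intros hs. contradiction.
Qed.
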